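(* Let $G=(V,E)$ be a bispanning graph, $(S,T)$ a pair of disjoint spanning trees of $G$ with $S\cup T=E$, $m=|E|/2$, and let $\langle(e_1,f_1),\dots,(e_m,f_m)\rangle$ be a unique exchange cyclic base ordering of $G$ and $(S,T)$. Then $\langle(f_m,e_m),\dots,(f_1,e_1)\rangle$ is also a unique exchange cyclic base ordering of $G$ and the same pair $(S,T)$.
   Context: Graphs are finite, undirected, possibly with parallel edges, no loops. A spanning tree is $T\subseteq E$ with $(V,T)$ connected and acyclic; $G$ is bispanning if $E$ is the disjoint union of two spanning trees. For a spanning tree $T$ and $e\notin T$, $C_G(T,e)$ is the edge set of the unique cycle in $T\cup\{e\}$; for $e\in T$, $D_G(T,e)$ is the set of edges of $G$ with one end in each component of $(V,T\setminus\{e\})$. For disjoint spanning trees $A,B$ with $A\cup B=E$: $(e,f)$ with $e\in A,f\in B$ is a unique $S$ edge exchange for $(A,B)$ if $D_G(A,e)\cap C_G(B,e)=\{e,f\}$; $(e,f)$ with $e\in B,f\in A$ is a unique $T$ edge exchange for $(A,B)$ if $D_G(B,e)\cap C_G(A,e)=\{e,f\}$. A unique exchange cyclic base ordering (UECBO) of $G$ and $(S,T)$, $m=|S|=|T|$, is a sequence $\langle(e_1,f_1),\dots,(e_m,f_m)\rangle$ together with orderings $S=\{s_1,\dots,s_m\}$, $T=\{t_1,\dots,t_m\}$ such that for each $i$, $(e_i,f_i)\in\{(s_i,t_i),(t_i,s_i)\}$ is a unique $S$ or $T$ edge exchange for $(\{s_i,\dots,s_m,t_1,\dots,t_{i-1}\},\{t_i,\dots,t_m,s_1,\dots,s_{i-1}\})$.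 *)

(* Defs.v *)
(* Finite multigraphs: vertex type V, edge type E (finTypes),
   each edge e has endpoints src e, tgt e (parallel edges allowed; loops are
   excluded by a hypothesis of the theorem). *)
From mathcomp Require Import all_boot.

Set Implicit Arguments.
Unset Strict Implicit.
Unset Printing Implicit Defensive.

Section Graph.
Variables (V E : finType) (src tgt : E -> V).

Definition adj (F : {set E}) : rel V :=
  fun x y => [exists e in F,
    ((src e == x) && (tgt e == y)) || ((src e == y) && (tgt e == x))].

Definition conn (F : {set E}) (x y : V) : bool := connect (adj F) x y.

Definition connectedb (F : {set E}) : bool := [forall x, forall y, conn F x y].

(* (V,F) is acyclic: no edge of F lies on a cycle of F, i.e. removing any
   edge f of F disconnects its endpoints. *)
Definition acyclicb (F : {set E}) : bool :=
  [forall f in F, ~~ conn (F :\ f) (src f) (tgt f)].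

Definition spanning_tree (F : {set E}) : bool := connectedb F && acyclicb F.

Definition bispanning : Prop :=
  exists A B : {set E}, [/\ spanning_tree A, spanning_tree B,
                           [disjoint A & B] & A :|: B = setT].

(* C_G(T,e) for e \notin T: edge set of the unique cycle of T + e, i.e. the
   edges of T + e that lie on a cycle of T + e. *)
Definition fcycle_set (T : {set E}) (e : E) : {set E} :=
  [set f in e |: T | conn ((e |: T) :\ f) (src f) (tgt f)].

(* D_G(T,e) for e \in T: edges with one end in each component of (V, T - e)
   (these components are those of src e and tgt e). *)
Definition fcut_set (T : {set E}) (e : E) : {set E} :=
  [set f | (conn (T :\ e) (src e) (src f) && conn (T :\ e) (tgt e) (tgt f))
        || (conn (T :\ e) (src e) (tgt f) && conn (T :\ e) (tgt e) (src f))].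

(* (e,f) with e \in A, f \in B is a unique exchange from A to B:
   D(A,e) \cap C(B,e) = {e,f}.  Unique S exchange for (A,B) is
   uexch A B e f; unique T exchange for (A,B) is uexch B A e f. *)
Definition uexch (A B : {set E}) (e f : E) : bool :=
  [&& e \in A, f \in B & fcut_set A e :&: fcycle_set B e == [set e; f]].

(* Unique exchange cyclic base ordering of G and (S,T), 0-indexed:
   p = [(e_1,f_1); ...; (e_m,f_m)], s = [s_1;...;s_m], t = [t_1;...;t_m]. *)
Definition UECBO (S T : {set E}) (p : seq (E * E)) : Prop :=
  exists s t : seq E,
    [/\ size s = size p, size t = size p, uniq s & uniq t] /\
    S = [set x in s] /\ T = [set x in t] /\
        (forall (x0 : E) i, i < size p ->
          let si := nth x0 s i in
          let ti := nth x0 t i in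
          let A := [set x in drop i s] :|: [set x in take i t] in
          let B := [set x in drop i t] :|: [set x in take i s] in
          let ef := nth (x0, x0) p i in
          ((ef == (si, ti)) || (ef == (ti, si))) &&
          (uexch A B ef.1 ef.2 || uexch B A ef.1 ef.2)).
End Graph.

(* Main.v *)
Require Import Defs.
From mathcomp Require Import all_boot.

Set Implicit Arguments. Unset Strict Implicit.
Section H.
Variables (V E : finType) (src tgt : E -> V).

Lemma adj_sym F : symmetric (adj src tgt F).
Proof.
move=> x y; rewrite /adj; apply: eq_existsb => e; congr (_ && _); exact: orbC.
Qed.

Lemma conn_sym F x y : conn src tgt F x y = conn src tgt F y x.
Proof. exact: (sym_connect_sym (adj_sym F)). Qed.

Lemma conn_eqL F x y : conn src tgt F x y -> forall z, conn src tgt F x z = conn src tgt F y z.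
Proof.
move=> hxy z; apply/idP/idP => h.
- by apply: connect_trans h; rewrite -/(conn _ _ _ _ _) conn_sym.
- exact: connect_trans hxy h.
Qed.

Lemma cut_eq A A1 e f : f \in fcut_set src tgt A e -> A1 :\ f = A :\ e ->
  fcut_set src tgt A1 f = fcut_set src tgt A e.
Proof.
rewrite /fcut_set => hf hA; rewrite hA; apply/setP => g; rewrite !inE.
move: hf; rewrite inE => /orP [/andP [h1 h2] | /andP [h1 h2]].
- by rewrite -(conn_eqL h1) -(conn_eqL h1) -(conn_eqL h2) -(conn_eqL h2).
- rewrite -(conn_eqL h1) -(conn_eqL h1) -(conn_eqL h2) -(conn_eqL h2).
  by case: (conn _ _ _ (src e) (src g)); case: (conn _ _ _ (src e) (tgt g));
     case: (conn _ _ _ (tgt e) (src g)); case: (conn _ _ _ (tgt e) (tgt g)).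
Qed.

Lemma uexch_swap (X Y : {set E}) (e f : E) : f \notin X -> uexch src tgt X Y e f ->
  uexch src tgt ((X :\ e) :|: [set f]) ((Y :\ f) :|: [set e]) f e.
Proof.
move=> fX /and3P [eX fY /eqP H].
have fcut : f \in fcut_set src tgt X e.
  have : f \in [set e; f] by rewrite !inE eqxx orbT.
  by rewrite -H inE => /andP [].
apply/and3P; split; first by rewrite !inE eqxx orbT.
  by rewrite !inE eqxx orbT.
rewrite (cut_eq fcut); last first.
  apply/setP => x; rewrite !inE; case: (x =P f) => [->|nf] /=.
    by rewrite (negbTE fX) andbF.
  by rewrite orbF.
have hU : f |: ((Y :\ f) :|: [set e]) = e |: Y.
  apply/setP => x; rewrite !inE.
  case: (x =P f) => [->|nf] /=; first by rewrite fY orbT.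
  by case: (x == e); rewrite ?orbT ?orbF.
have -> : fcycle_set src tgt ((Y :\ f) :|: [set e]) f = fcycle_set src tgt Y e.
  by rewrite /fcycle_set hU.
by rewrite H; apply/eqP/setP => x; rewrite !inE orbC.
Qed.
End H.

Theorem mainTheorem6 (V E : finType) (src tgt : E -> V)
  (Hloopless : forall e : E, src e != tgt e)
  (S T : {set E})
  (HS : spanning_tree src tgt S) (HT : spanning_tree src tgt T)
  (HST : [disjoint S & T]) (HU : S :|: T = setT)
  (p : seq (E * E)) :
  UECBO src tgt S T p ->
  UECBO src tgt S T (rev [seq (x.2, x.1) | x <- p]).
Proof.
move=> [s [t [[Hs Ht us ut] [HSs [HTt Hp]]]]].
exists (rev s), (rev t).
split; first by rewrite !size_rev size_map Hs Ht rev_uniq us rev_uniq ut.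
split; first by apply/setP=> x; rewrite HSs !inE mem_rev.
split; first by apply/setP=> x; rewrite HTt !inE mem_rev.
move=> x0 j; rewrite size_rev size_map => hj.
have hi : size p - j.+1 < size p by rewrite -subSn // subSS leq_subr.
have := Hp x0 _ hi; rewrite /=.
set i := size p - j.+1.
have his : i < size s by rewrite Hs.
have hit : i < size t by rewrite Ht.
have hji : size p - j = i.+1 by rewrite /i subnSK.
have e1 : nth (x0, x0) (rev [seq (x.2, x.1) | x <- p]) j =
    ((nth (x0, x0) p i).2, (nth (x0, x0) p i).1).
  by rewrite nth_rev size_map // (nth_map (x0, x0)).
have e2 : nth x0 (rev s) j = nth x0 s i by rewrite nth_rev Hs.
have e3 : nth x0 (rev t) j = nth x0 t i by rewrite nth_rev Ht.
have e4 : drop j (rev s) = rev (take i.+1 s) by rewrite drop_rev Hs hji.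
have e5 : drop j (rev t) = rev (take i.+1 t) by rewrite drop_rev Ht hji.
have e6 : take j (rev s) = rev (drop i.+1 s) by rewrite take_rev Hs hji.
have e7 : take j (rev t) = rev (drop i.+1 t) by rewrite take_rev Ht hji.
rewrite e1 e2 e3 e4 e5 e6 e7.
set si := nth x0 s i; set ti := nth x0 t i.
have sS : forall x, x \in s -> x \in S by move=> x; rewrite HSs inE.
have tT : forall x, x \in t -> x \in T by move=> x; rewrite HTt inE.
have dST : forall x, x \in S -> x \in T -> False.
  by move=> x xS xT; move/disjoint_setI0: HST => /setP/(_ x); rewrite !inE xS xT.
have usi := us; rewrite -(cat_take_drop i s) (drop_nth x0 his) -/si in usi.
rewrite cat_uniq /= in usi; case/and3P: usi => _ hs1 /andP [hs2 _].
have usi' : si \notin take i s by move: hs1; rewrite negb_or => /andP [].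
have uti := ut; rewrite -(cat_take_drop i t) (drop_nth x0 hit) -/ti in uti.
rewrite cat_uniq /= in uti; case/and3P: uti => _ ht1 /andP [ht2 _].
have uti' : ti \notin take i t by move: ht1; rewrite negb_or => /andP [].
have siS : si \in S by apply: sS; apply: mem_nth.
have tiT : ti \in T by apply: tT; apply: mem_nth.
set A := [set x in drop i s] :|: [set x in take i t].
set B := [set x in drop i t] :|: [set x in take i s].
have siA : si \in A by rewrite !inE (drop_nth x0 his) inE eqxx.
have tiB : ti \in B by rewrite !inE (drop_nth x0 hit) inE eqxx.
have siB : si \notin B.
  rewrite !inE negb_or usi' andbT; apply/negP => /mem_drop /tT; exact: dST.
have tiA : ti \notin A.
  rewrite !inE negb_or uti' andbT; apply/negP => /mem_drop /sS => h; exact: dST h tiT.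
have siti : (si == ti) = false by apply/eqP => h; apply: (dST si siS); rewrite h.
have sitk : (si \in take i t) = false.
  by apply/negP => /mem_take /tT; apply: dST.
have tisk : (ti \in take i s) = false.
  by apply/negP => /mem_take /sS => h; apply: dST h tiT.
have sid : (si \in drop i.+1 s) = false by exact: negbTE hs2.
have tid : (ti \in drop i.+1 t) = false by exact: negbTE ht2.
have eA1 : (A :\ si) :|: [set ti] =
    [set x in take i.+1 t] :|: [set x in drop i.+1 s].
  apply/setP => x; rewrite !inE (drop_nth x0 his) (take_nth x0 hit) mem_rcons !inE -/si -/ti.
  case: (x =P si) => [->|/eqP/negbTE nx] /=; first by rewrite siti sitk sid.
  rewrite /=.
  by case: (x == ti); case: (x \in take i t); case: (x \in drop i.+1 s).
have eB1 : (B :\ ti) :|: [set si] =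
    [set x in take i.+1 s] :|: [set x in drop i.+1 t].
  apply/setP => x; rewrite !inE (drop_nth x0 hit) (take_nth x0 his) mem_rcons !inE -/si -/ti.
  case: (x =P ti) => [->|/eqP/negbTE nx] /=; first by rewrite eq_sym siti tisk tid.
  rewrite /=.
  by case: (x == si); case: (x \in take i s); case: (x \in drop i.+1 t).
have sr : forall l : seq E, [set x in rev l] = [set x in l].
  by move=> l; apply/setP => x; rewrite !inE mem_rev.
rewrite !sr -eA1 -eB1.
case: (nth (x0, x0) p i) => a b /=.
move=> /andP [/orP [/eqP [-> ->] | /eqP [-> ->]] /orP Hu].
- rewrite eqxx orbT /=; apply/orP; right.
  case: Hu => Hu; last by move: Hu => /and3P [h _ _]; rewrite h in siB.
  exact: uexch_swap tiA Hu.
- rewrite eqxx /=; apply/orP; left.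
  case: Hu => Hu; first by move: Hu => /and3P [h _ _]; rewrite h in tiA.
  exact: uexch_swap siB Hu.
Qed.
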